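(* Let $E$ and $F$ be Banach lattices and consider the Banach lattice direct sum $E \oplus F$ (ordered coordinatewise), with canonical projections $\pi_E: E \oplus F \to E$ and $\pi_F: E \oplus F \to F$. (1) For nonempty sets $A \subset E$ and $B \subset F$, both $A$ is almost Grothendieck in $E$ and $B$ is almost Grothendieck in $F$ if and only if $A \times B$ is almost Grothendieck in $E \oplus F$. (2) If $C \subset E \oplus F$ is almost Grothendieck, then $\pi_E(C)$ and $\pi_F(C)$ are almost Grothendieck in $E$ and $F$, respectively.
   Context: For a Banach lattice $G$, every bounded linear operator $T: G \to c_0$ has the form $T(x) = (x_n'(x))_n$ for a unique weak* null sequence $(x_n') \subset G'$; $T$ is a disjoint operator if $(x_n')$ is disjoint in the dual Banach lattice $G'$. A subset $A \subset G$ is almost Grothendieck if $T(A)$ is relatively weakly compact in $c_0$ for every disjoint operator $T: G \to c_0$. *)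

(* Defs.v *)
From HB Require Import structures.
From mathcomp Require Import all_boot all_order all_algebra.
From mathcomp Require Import all_classical all_reals all_analysis.
Import Order.TTheory GRing.Theory Num.Theory.
Import numFieldNormedType.Exports.

Set Implicit Arguments.
Unset Strict Implicit.
Unset Printing Implicit Defensive.

Local Open Scope classical_set_scope.
Local Open Scope ring_scope.

(* A lattice structure on a real normed space V making it a normed
   vector (Riesz) lattice: a partial order compatible with the linear
   structure, binary suprema [join], and a lattice norm
   (|x| <= |y| -> ||x|| <= ||y||, with |x| := x \/ -x). *)
Record NVL (R : realType) (V : normedModType R) := {
  le : V -> V -> Prop;
  join : V -> V -> V;
  le_refl : forall x, le x x;
  le_trans : forall x y z, le x y -> le y z -> le x z;
  le_anti : forall x y, le x y -> le y x -> x = y;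
  le_add : forall x y z, le x y -> le (x + z) (y + z);
  le_scale : forall (a : R) x y, 0 <= a -> le x y -> le (a *: x) (a *: y);
  join_l : forall x y, le x (join x y);
  join_r : forall x y, le y (join x y);
  join_lub : forall x y z, le x z -> le y z -> le (join x y) z;
  norm_mono : forall x y, le (join x (- x)) (join y (- y)) -> `|x| <= `|y|
}.

Definition labs (R : realType) (V : normedModType R) (L : NVL V) (x : V) : V :=
  join L x (- x).

(* The norm on E * F is MathComp-Analysis' product norm
   ||(x,y)|| = max(||x||, ||y||), a lattice norm. *)
Section DirectSum.
Variables (R : realType) (E F : normedModType R) (LE : NVL E) (LF : NVL F).

Definition sum_le (p q : E * F) : Prop := le LE p.1 q.1 /\ le LF p.2 q.2.
Definition sum_join (p q : E * F) : E * F := (join LE p.1 q.1, join LF p.2 q.2).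

Lemma sum_le_refl x : sum_le x x.
Proof. by split; apply: le_refl. Qed.

Lemma sum_le_trans x y z : sum_le x y -> sum_le y z -> sum_le x z.
Proof. by move=> [? ?] [? ?]; split; apply: le_trans; eassumption. Qed.

Lemma sum_le_anti x y : sum_le x y -> sum_le y x -> x = y.
Proof.
case: x => x1 x2; case: y => y1 y2 [/= h1 h2] [/= h3 h4].
by rewrite (le_anti h1 h3) (le_anti h2 h4).
Qed.

Lemma sum_le_add x y z : sum_le x y -> sum_le (x + z) (y + z).
Proof. by move=> [? ?]; split; apply: le_add. Qed.

Lemma sum_le_scale (a : R) x y : 0 <= a -> sum_le x y -> sum_le (a *: x) (a *: y).
Proof. by move=> a0 [? ?]; split; apply: le_scale. Qed.

Lemma sum_join_l x y : sum_le x (sum_join x y).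
Proof. by split; apply: join_l. Qed.

Lemma sum_join_r x y : sum_le y (sum_join x y).
Proof. by split; apply: join_r. Qed.

Lemma sum_join_lub x y z : sum_le x z -> sum_le y z -> sum_le (sum_join x y) z.
Proof. by move=> [? ?] [? ?]; split; apply: join_lub. Qed.

Lemma sum_norm_mono x y :
  sum_le (sum_join x (- x)) (sum_join y (- y)) -> `|x| <= `|y|.
Proof.
move=> [/= h1 h2]; rewrite !prod_normE /=.
have n1 := norm_mono h1; have n2 := norm_mono h2.
rewrite ge_max !le_max.
by rewrite n1 n2 orbT.
Qed.

Definition sumNVL : NVL (E * F)%type :=
  Build_NVL sum_le_refl sum_le_trans sum_le_anti sum_le_add sum_le_scale
    sum_join_l sum_join_r sum_join_lub sum_norm_mono.

End DirectSum.

Section Dual.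
Variables (R : realType) (G : normedModType R) (L : NVL G).

Definition dual_elem (f : G -> R) : Prop :=
  (forall (a : R) (x y : G), f (a *: x + y) = a * f x + f y) /\ continuous f.

(* modulus |f| of f in G', on the positive cone (Riesz-Kantorovich):
   |f|(y) = sup { |f z| : |z| <= y }  for y >= 0 *)
Definition dual_abs (f : G -> R) (y : G) : R :=
  sup [set `|f z| | z in [set z | le L (labs L z) y]].

(* f and g are disjoint in the dual lattice G', i.e. |f| /\ |g| = 0,
   where (|f| /\ |g|)(x) = inf { |f|(y) + |g|(x - y) : 0 <= y <= x }
   for x >= 0 (Riesz-Kantorovich formula for the lattice operations of G') *)
Definition dual_disjoint (f g : G -> R) : Prop :=
  forall x : G, le L 0 x ->
    inf [set dual_abs f y + dual_abs g (x - y) |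
          y in [set y | le L 0 y /\ le L y x]] = 0.

(* A sequence (x_n') in G' that is weak* null and disjoint in G';
   these are exactly the data of the disjoint operators
   T : G -> c_0,  T x = (x_n'(x))_n. *)
Definition disjoint_weakstar_null (f : nat -> G -> R) : Prop :=
  [/\ (forall n, dual_elem (f n)),
      (forall x, (fun n => f n x) @ \oo --> (0 : R)) &
      (forall n m, n <> m -> dual_disjoint (f n) (f m))].

End Dual.

Record c0 (R : realType) := C0 {
  c0seq : nat -> R;
  c0seq_null : c0seq @ \oo --> (0 : R)
}.

HB.instance Definition _ (R : realType) := gen_eqMixin (c0 R).
HB.instance Definition _ (R : realType) := gen_choiceMixin (c0 R).

(* continuous linear functionals on c_0 with its sup norm
   ||u|| = sup_n |u_n| (boundedness written out: |phi u| <= M c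
   whenever |u_n| <= c for all n) *)
Record c0dual (R : realType) := C0dual {
  c0fun : c0 R -> R;
  c0fun_add : forall u v w : c0 R,
    c0seq w = (fun n => c0seq u n + c0seq v n) -> c0fun w = c0fun u + c0fun v;
  c0fun_scale : forall (a : R) (u w : c0 R),
    c0seq w = (fun n => a * c0seq u n) -> c0fun w = a * c0fun u;
  c0fun_bounded : exists M : R, forall (u : c0 R) (c : R),
    (forall n, `|c0seq u n| <= c) -> `|c0fun u| <= M * c
}.

(* the weak topology sigma(c_0, c_0'): initial topology of the
   evaluation map into the product (pointwise) topology on R^(c_0') *)
Definition c0_eval (R : realType) (u : c0 R) : {ptws c0dual R -> R} :=
  fun phi => c0fun phi u.

Definition c0_weak (R : realType) := initial_topology (@c0_eval R).

Definition rel_weakly_compact (R : realType) (S : set (c0 R)) : Prop :=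
  compact (@closure (c0_weak R) S).

Definition almost_grothendieck (R : realType) (G : normedModType R)
    (L : NVL G) (A : set G) : Prop :=
  forall f : nat -> G -> R, disjoint_weakstar_null L f ->
    rel_weakly_compact [set u : c0 R | exists2 x, A x & c0seq u = (fun n => f n x)].

(* Main.v *)
Require Import Defs.
From HB Require Import structures.
From mathcomp Require Import all_boot all_order all_algebra.
From mathcomp Require Import all_classical all_reals all_analysis.
Import Order.TTheory GRing.Theory Num.Theory.
Import numFieldNormedType.Exports.
Local Open Scope classical_set_scope.
Local Open Scope ring_scope.

HB.instance Definition _ (R : realType) := gen_eqMixin (c0dual R).

Section Top.
Variable R : realType.

Lemma eval_cont (phi : c0dual R) : continuous (fun u : c0_weak R => c0fun phi u).
Proof.
move=> u.
apply: (@continuous_comp (c0_weak R) {ptws c0dual R -> R} R (@c0_eval R) (proj phi)).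
  exact: initial_continuous.
exact: proj_continuous.
Qed.

Lemma cont_into (X : topologicalType) (g : X -> c0_weak R) :
  (forall phi, continuous (fun x => c0fun phi (g x))) -> continuous g.
Proof.
move=> H; apply: continuous_comp_initial => x.
apply/cvg_sup => i.
have : continuous ((@c0_eval R \o g) : X -> initial_topology (fun f : c0dual R -> R => f i)).
  by apply: continuous_comp_initial; exact: H.
exact.
Qed.


Lemma c0_eq (u v : c0 R) : c0seq u = c0seq v -> u = v.
Proof.
case: u => su pu; case: v => sv pv /= e; subst sv.
by congr C0; exact: Prop_irrelevance.
Qed.

Definition coord (k : nat) : c0dual R.
Proof.
refine (@C0dual R (fun u => c0seq u k) _ _ _).
- by move=> u v w ->.
- by move=> a u w ->.
- by exists 1 => u c H; rewrite mul1r; exact: H.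
Defined.

Lemma c0_hausdorff : hausdorff_space (c0_weak R).
Proof.
move=> p q clpq; apply: c0_eq; apply: funext => k.
apply: Rhausdorff => A B nA nB.
have := clpq _ _ (@eval_cont (coord k) p A nA) (@eval_cont (coord k) q B nB).
by move=> [u [Au Bu]]; exists (c0seq u k).
Qed.

Lemma c0add_null (u v : c0 R) : (fun n => c0seq u n + c0seq v n) @ \oo --> (0:R).
Proof. rewrite -[X in _ --> X](addr0 0); exact: (cvgD (c0seq_null u) (c0seq_null v)). Qed.

Definition c0add (u v : c0 R) : c0 R := C0 (c0add_null u v).

Lemma add_cont : continuous (fun x : c0_weak R * c0_weak R => (c0add x.1 x.2 : c0_weak R)).
Proof.
apply: cont_into => phi.
have -> : (fun x : c0_weak R * c0_weak R => c0fun phi (c0add x.1 x.2)) =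
   (fun x => c0fun phi x.1 + c0fun phi x.2).
  by apply: funext => x; apply: c0fun_add.
move=> x; apply: cvgD.
  exact: (@continuous_comp _ _ _ fst (fun u : c0_weak R => c0fun phi u) x cvg_fst (eval_cont phi _)).
exact: (@continuous_comp _ _ _ snd (fun u : c0_weak R => c0fun phi u) x cvg_snd (eval_cont phi _)).
Qed.

Lemma rwc_sum (S1 S2 S : set (c0 R)) :
  rel_weakly_compact S1 -> rel_weakly_compact S2 ->
  (forall w, S w -> exists2 u, S1 u & exists2 v, S2 v &
      c0seq w = (fun n => c0seq u n + c0seq v n)) ->
  rel_weakly_compact S.
Proof.
rewrite /rel_weakly_compact => c1 c2 H.
pose K : set (c0_weak R) :=
  [set c0add x.1 x.2 | x in (@closure (c0_weak R) S1) `*` (@closure (c0_weak R) S2)].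
have cK : compact K.
  apply: continuous_compact; last exact: compact_setX.
  apply: continuous_subspaceT; exact: add_cont.
apply: (@subclosed_compact (c0_weak R) _ K (@closed_closure (c0_weak R) S) cK).
have -> : K = closure K by apply/closure_id; exact: compact_closed c0_hausdorff cK.
apply: closureS => w /H [u S1u [v S2v e]].
exists (u, v); first by split; apply: subset_closure.
by apply: c0_eq; rewrite e.
Qed.

End Top.

Section Lat.
Variables (R : realType) (G : normedModType R) (L : NVL G).

Lemma join00 : join L 0 (- 0) = 0.
Proof.
rewrite oppr0; apply: Defs.le_anti; first by apply: Defs.join_lub; apply: Defs.le_refl.
exact: Defs.join_l.
Qed.

Lemma labs_le0 (z : G) : le L (join L z (- z)) 0 -> z = 0.
Proof.
move=> H.
have h1 : le L z 0 := Defs.le_trans (Defs.join_l L z (-z)) H.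
have h2 : le L (- z) 0 := Defs.le_trans (Defs.join_r L z (-z)) H.
have := Defs.le_add z h2; rewrite addNr add0r => h3.
exact: Defs.le_anti h1 h3.
Qed.

Lemma le_sub0 (x y : G) : le L y x -> le L 0 (x - y).
Proof. by move=> h; have := Defs.le_add (- y) h; rewrite subrr. Qed.

End Lat.

Lemma pairB0 (R : realType) (E F : normedModType R) (a b : E) : ((a, 0) - (b, 0) : E * F) = (a - b, 0).
Proof. have -> : (a - b, 0) = ((a - b, 0 - 0) : E * F) by rewrite subr0. by []. Qed.
Lemma pair0B (R : realType) (E F : normedModType R) (a b : F) : ((0, a) - (0, b) : E * F) = (0, a - b).
Proof. have -> : (0, a - b) = ((0 - 0, a - b) : E * F) by rewrite subr0. by []. Qed.

Section Sum.
Variables (R : realType) (E F : normedModType R) (LE : NVL E) (LF : NVL F).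
Notation LS := (sumNVL LE LF).

Lemma D1 (f : E -> R) (y : E * F) : le LF 0 y.2 ->
  dual_abs LS (fun z => f z.1) y = dual_abs LE f y.1.
Proof.
move=> hy; rewrite /dual_abs; congr sup; apply/seteqP; split.
- by move=> r [z [hz _] <-]; exists z.1.
- move=> r [z1 hz <-]; exists (z1, 0) => //; split => //=.
  by rewrite join00.
Qed.

Lemma D1' (f : F -> R) (y : E * F) : le LE 0 y.1 ->
  dual_abs LS (fun z => f z.2) y = dual_abs LF f y.2.
Proof.
move=> hy; rewrite /dual_abs; congr sup; apply/seteqP; split.
- by move=> r [z [_ hz] <-]; exists z.2.
- move=> r [z1 hz <-]; exists (0, z1) => //; split => //=.
  by rewrite join00.
Qed.

Lemma D2 (g : E * F -> R) (y1 : E) :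
  dual_abs LE (fun x => g (x, 0)) y1 = dual_abs LS g (y1, 0).
Proof.
rewrite /dual_abs; congr sup; apply/seteqP; split.
- move=> r [z1 hz <-]; exists (z1, 0) => //; split => //=.
  by rewrite join00; apply: Defs.le_refl.
- move=> r [[z1 z2] [/= hz1 hz2] <-]; exists z1 => //.
  by rewrite (@labs_le0 _ _ LF _ hz2).
Qed.

Lemma D2' (g : E * F -> R) (y2 : F) :
  dual_abs LF (fun x => g (0, x)) y2 = dual_abs LS g (0, y2).
Proof.
rewrite /dual_abs; congr sup; apply/seteqP; split.
- move=> r [z1 hz <-]; exists (0, z1) => //; split => //=.
  by rewrite join00; apply: Defs.le_refl.
- move=> r [[z1 z2] [/= hz1 hz2] <-]; exists z2 => //.
  by rewrite (@labs_le0 _ _ LE _ hz1).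
Qed.


Lemma J1 (f f' : E -> R) : dual_disjoint LE f f' ->
  dual_disjoint LS (fun z => f z.1) (fun z => f' z.1).
Proof.
move=> H [x1 x2] [/= h1 h2]; rewrite -(H x1 h1); congr inf; apply/seteqP; split.
- move=> r [[y1 y2] [[/= a1 a2] [/= b1 b2]] <-]; exists y1 => //.
  rewrite D1 // D1 //=; exact: le_sub0.
- move=> r [y1 [a1 b1] <-]; exists (y1, 0).
    by split; split => //=; apply: Defs.le_refl.
  by rewrite D1 /=; [rewrite D1 //= subr0 | exact: Defs.le_refl].
Qed.

Lemma J1' (f f' : F -> R) : dual_disjoint LF f f' ->
  dual_disjoint LS (fun z => f z.2) (fun z => f' z.2).
Proof.
move=> H [x1 x2] [/= h1 h2]; rewrite -(H x2 h2); congr inf; apply/seteqP; split.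
- move=> r [[y1 y2] [[/= a1 a2] [/= b1 b2]] <-]; exists y2 => //.
  rewrite D1' // D1' //=; exact: le_sub0.
- move=> r [y2 [a2 b2] <-]; exists (0, y2).
    by split; split => //=; apply: Defs.le_refl.
  by rewrite D1' /=; [rewrite D1' //= subr0 | exact: Defs.le_refl].
Qed.

Lemma J2 (g g' : E * F -> R) : dual_disjoint LS g g' ->
  dual_disjoint LE (fun x => g (x, 0)) (fun x => g' (x, 0)).
Proof.
move=> H x1 h1; rewrite -(H (x1, 0)); last by split => //; apply: Defs.le_refl.
congr inf; apply/seteqP; split.
- move=> r [y1 [a1 b1] <-]; exists (y1, 0).
    by split; split => //=; apply: Defs.le_refl.
  by rewrite pairB0 -!D2.
- move=> r [[y1 y2] [[/= a1 a2] [/= b1 b2]] <-].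
  have e : y2 = 0 := Defs.le_anti b2 a2.
  subst y2; exists y1 => //.
  by rewrite pairB0 -!D2.
Qed.

Lemma J2' (g g' : E * F -> R) : dual_disjoint LS g g' ->
  dual_disjoint LF (fun x => g (0, x)) (fun x => g' (0, x)).
Proof.
move=> H x2 h2; rewrite -(H (0, x2)); last by split => //; apply: Defs.le_refl.
congr inf; apply/seteqP; split.
- move=> r [y2 [a2 b2] <-]; exists (0, y2).
    by split; split => //=; apply: Defs.le_refl.
  by rewrite pair0B -!D2'.
- move=> r [[y1 y2] [[/= a1 a2] [/= b1 b2]] <-].
  have e : y1 = 0 := Defs.le_anti b1 a1.
  subst y1; exists y2 => //.
  by rewrite pair0B -!D2'.
Qed.


Lemma W1 (f : nat -> E -> R) : disjoint_weakstar_null LE f ->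
  disjoint_weakstar_null LS (fun n z => f n z.1).
Proof.
case=> de nu dj; split.
- move=> n; have [lin cont] := de n; split.
    by move=> a x y; exact: lin.
  move=> x; exact: (continuous_comp (f:=fst) cvg_fst (cont x.1)).
- by move=> x; exact: nu.
- by move=> n m nm; apply: J1; exact: dj.
Qed.

Lemma W1' (f : nat -> F -> R) : disjoint_weakstar_null LF f ->
  disjoint_weakstar_null LS (fun n z => f n z.2).
Proof.
case=> de nu dj; split.
- move=> n; have [lin cont] := de n; split.
    by move=> a x y; exact: lin.
  move=> x; exact: (continuous_comp (f:=snd) cvg_snd (cont x.2)).
- by move=> x; exact: nu.
- by move=> n m nm; apply: J1'; exact: dj.
Qed.

Lemma W2 (g : nat -> E * F -> R) : disjoint_weakstar_null LS g ->
  disjoint_weakstar_null LE (fun n x => g n (x, 0)).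
Proof.
case=> de nu dj; split.
- move=> n; have [lin cont] := de n; split.
    move=> a x y /=; rewrite -lin; congr (g n _).
    have -> : ((a *: x + y, 0) : E * F) = (a *: x + y, a *: 0 + 0).
      by rewrite scaler0 addr0.
    by [].
  move=> x; apply: (continuous_comp (f := fun x : E => ((x, 0) : E * F)) _ (cont (x, 0))).
  by apply: cvg_pair; [exact: cvg_id | exact: cvg_cst].
- by move=> x; exact: nu.
- by move=> n m nm; apply: J2; exact: dj.
Qed.

Lemma W2' (g : nat -> E * F -> R) : disjoint_weakstar_null LS g ->
  disjoint_weakstar_null LF (fun n x => g n (0, x)).
Proof.
case=> de nu dj; split.
- move=> n; have [lin cont] := de n; split.
    move=> a x y /=; rewrite -lin; congr (g n _).
    have -> : ((0, a *: x + y) : E * F) = (a *: 0 + 0, a *: x + y).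
      by rewrite scaler0 addr0.
    by [].
  move=> x; apply: (continuous_comp (f := fun x : F => ((0, x) : E * F)) _ (cont (0, x))).
  by apply: cvg_pair; [exact: cvg_cst | exact: cvg_id].
- by move=> x; exact: nu.
- by move=> n m nm; apply: J2'; exact: dj.
Qed.

End Sum.

Theorem mainTheorem7 (R : realType) (E F : completeNormedModType R)
    (LE : NVL E) (LF : NVL F) :
  (forall (A : set E) (B : set F), A !=set0 -> B !=set0 ->
     (almost_grothendieck LE A /\ almost_grothendieck LF B <->
      almost_grothendieck (sumNVL LE LF) (A `*` B))) /\
  (forall C : set (E * F),
     almost_grothendieck (sumNVL LE LF) C ->
     almost_grothendieck LE (fst @` C) /\ almost_grothendieck LF (snd @` C)).
Proof.
have P2 : forall C : set (E * F),
     almost_grothendieck (sumNVL LE LF) C ->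
     almost_grothendieck LE (fst @` C) /\ almost_grothendieck LF (snd @` C).
  move=> C HC; split.
  - move=> f Hf; have := HC _ (@W1 _ _ _ LE LF f Hf).
    congr rel_weakly_compact; apply/seteqP; split.
    + by move=> u [z Cz e]; exists z.1 => //; exists z.
    + by move=> u [_ [z Cz <-] e]; exists z.
  - move=> f Hf; have := HC _ (@W1' _ _ _ LE LF f Hf).
    congr rel_weakly_compact; apply/seteqP; split.
    + by move=> u [z Cz e]; exists z.2 => //; exists z.
    + by move=> u [_ [z Cz <-] e]; exists z.
split => //.
move=> A B [a Aa] [b Bb]; split.
- move=> [hA hB] g Hg.
  have Hg1 := @W2 _ _ _ LE LF g Hg; have Hg2 := @W2' _ _ _ LE LF g Hg.
  apply: (@rwc_sum R _ _ _ (hA _ Hg1) (hB _ Hg2)).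
  move=> w [[x y] [/= Ax By] e].
  have [_ n1 _] := Hg1; have [_ n2 _] := Hg2.
  exists (C0 (n1 x)); first by exists x.
  exists (C0 (n2 y)); first by exists y.
  rewrite e /=; apply: funext => n.
  have [de _ _] := Hg; have [lin _] := de n.
  have := lin 1 (x, 0) (0, y); rewrite mul1r scale1r => <-.
  congr (g n _).
  have -> : ((x, 0) + (0, y) : E * F) = (x + 0, 0 + y) by [].
  by rewrite addr0 add0r.
- move=> H; have [h1 h2] := P2 _ H.
  have e1 : fst @` (A `*` B) = A.
    apply/seteqP; split; first by move=> _ [[x y] [Ax _] <-].
    by move=> x Ax; exists (x, b).
  have e2 : snd @` (A `*` B) = B.
    apply/seteqP; split; first by move=> _ [[x y] [_ By] <-].
    by move=> y By; exists (a, y).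
  by split; [rewrite -e1 | rewrite -e2].
Qed.
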